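(* In the setting of the context, suppose $\mathbf H$ admits dual Specht modules $\{S_\lambda\}_{\lambda\in\Lambda}$ and that $\mathcal R^1\mathcal G(S_\lambda)=0$ for all $\lambda\in\Lambda$. Then: (a) an $\mathbf H$-module $N$ has a dual Specht filtration if and only if $\mathcal G(N)\in\mathbf S\text{-mod}$ has a $\Delta$-filtration; (b) $\mathcal G\circ\mathcal F(M)\cong M$ for every $\mathbf S$-module $M$ with a $\Delta$-filtration.
   Context: Let $K$ be a field, $\mathbf S,\mathbf H$ finite-dimensional $K$-algebras, $e=e^2\in\mathbf S$ with $e\mathbf Se\cong\mathbf H$; modules are finite-dimensional left modules. Schur functor $\mathcal F:\mathbf S\text{-mod}\to\mathbf H\text{-mod}$, $M\mapsto eM$; inverse Schur functor $\mathcal G:\mathbf H\text{-mod}\to\mathbf S\text{-mod}$, $N\mapsto\mathrm{Hom}_{\mathbf H}(e\mathbf S,N)$ (left exact, $\mathcal F\circ\mathcal G\cong\mathrm{id}$); $\mathcal R^1\mathcal G$ is its first right derived functor. $\mathbf H$ admits dual Specht modules if: (i) there is a family of pairwise non-isomorphic $\mathbf H$-modules $\{S^\lambda\}_{\lambda\in\Lambda}$ (Specht modules) indexed by a finite poset $(\Lambda,\le)$ such that $\mathrm{Ext}^1_{\mathbf H}(S^\lambda,S^\mu)\ne0$ implies $\lambda>\mu$; (ii) there are an algebra automorphism $\#$ and an algebra anti-automorphism $*$ of $\mathbf H$ and an order-reversing involution $\lambda\mapsto\lambda^t$ of $\Lambda$ with $S_{\lambda^t}\cong(S^\lambda)^\#$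 for all $\lambda$, where $V^\#$ is $V$ with $h$ acting by $h^\#$, $V^*=\mathrm{Hom}_K(V,K)$ with $(h\cdot f)(v)=f(h^*v)$, and $S_\lambda:=(S^\lambda)^*$ is the dual Specht module. Put $\Delta(\lambda):=\mathcal G(S_\lambda)$. A dual Specht filtration of $N$ is a chain $0=N_0\subset\cdots\subset N_t=N$ with each $N_i/N_{i-1}\cong S_{\mu_i}$ for some $\mu_i\in\Lambda$; a $\Delta$-filtration is defined likewise with subquotients of the form $\Delta(\mu)$. *)

(* Defs.v *)
From HB Require Import structures.
From mathcomp Require Import all_boot all_order all_algebra.
From mathcomp Require Import falgebra.
Set Implicit Arguments.
Unset Strict Implicit.
Unset Printing Implicit Defensive.
Import GRing.Theory.
Local Open Scope ring_scope.

Section Modules.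
Variable K : fieldType.

Record fmod (A : falgType K) := FMod {
  mcar : vectType K;
  mact : A -> 'End(mcar) }.
Arguments FMod {A} mcar mact.

Definition is_fmod (A : falgType K) (M : fmod A) : Prop :=
  [/\ forall (c : K) (a b : A), mact M (c *: a + b) = c *: mact M a + mact M b,
      forall a b : A, mact M (a * b) = (mact M a \o mact M b)%VF
    & mact M 1 = \1%VF].

Definition is_hom (A : falgType K) (M N : fmod A) (f : 'Hom(mcar M, mcar N)) :=
  forall a : A, (f \o mact M a = mact N a \o f)%VF.

Definition mod_iso (A : falgType K) (M N : fmod A) : Prop :=
  exists (f : 'Hom(mcar M, mcar N)) (g : 'Hom(mcar N, mcar M)),
    [/\ is_hom f, is_hom g, (g \o f = \1)%VF & (f \o g = \1)%VF].

(* Ext^1_A(X, Y) <> 0 : there is a non-split extension 0 -> Y -> E -> X -> 0 *)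
Definition ext1_nonzero (A : falgType K) (X Y : fmod A) : Prop :=
  exists (E : fmod A) (i : 'Hom(mcar Y, mcar E)) (p : 'Hom(mcar E, mcar X)),
    [/\ is_fmod E, is_hom i, is_hom p,
        [/\ lker i = 0%VS, limg p = fullv & limg i = lker p]
      & ~ exists s : 'Hom(mcar X, mcar E), is_hom s /\ (p \o s = \1)%VF].

(* submodules, and the statement that U'/U is isomorphic to X, for U <= U'
   submodules of M: there is an A-linear surjection U' ->> X with kernel U *)
Definition is_submod (A : falgType K) (M : fmod A) (U : {vspace mcar M}) :=
  forall a : A, (mact M a @: U <= U)%VS.

Definition subquot_iso (A : falgType K) (M : fmod A) (U U' : {vspace mcar M})
    (X : fmod A) : Prop :=
  exists g : 'Hom(mcar M, mcar X),
    [/\ (g @: U' = fullv)%VS, (U' :&: lker g = U)%VS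
      & forall (a : A) (v : mcar M), v \in U' -> g (mact M a v) = mact X a (g v)].

Definition has_filtration (A : falgType K) (I : Type) (D : I -> fmod A)
    (M : fmod A) : Prop :=
  exists (t : nat) (U : nat -> {vspace mcar M}),
    [/\ U 0%N = 0%VS, U t = fullv,
        forall i, (i <= t)%N -> is_submod (U i),
        forall i, (i < t)%N -> (U i <= U i.+1)%VS
      & forall i, (i < t)%N -> exists mu : I, subquot_iso (U i) (U i.+1) (D mu)].

Definition twist_mod (A : falgType K) (sh : A -> A) (V : fmod A) : fmod A :=
  FMod (mcar V) (fun h => mact V (sh h)).

Definition dual_mod (A : falgType K) (st : A -> A) (V : fmod A) : fmod A :=
  FMod ('Hom(mcar V, K^o))
       (fun h => linfun (fun f : 'Hom(mcar V, K^o) => (f \o mact V (st h))%VF)).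

Definition alg_automorphism (A : falgType K) (sh : A -> A) : Prop :=
  [/\ forall (c : K) (a b : A), sh (c *: a + b) = c *: sh a + sh b,
      forall a b : A, sh (a * b) = sh a * sh b, sh 1 = 1 & bijective sh].

Definition alg_antiautomorphism (A : falgType K) (st : A -> A) : Prop :=
  [/\ forall (c : K) (a b : A), st (c *: a + b) = c *: st a + st b,
      forall a b : A, st (a * b) = st b * st a, st 1 = 1 & bijective st].

Definition corner_iso (H S : falgType K) (e : S) (phi : H -> S) : Prop :=
  [/\ forall (c : K) (a b : H), phi (c *: a + b) = c *: phi a + phi b,
      forall a b : H, phi (a * b) = phi a * phi b, phi 1 = e,
      injective phi
    & (forall h : H, e * phi h * e = phi h) /\
      (forall s : S, exists h : H, phi h = e * s * e)].

Section Schur.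
Variables (H S : falgType K) (e : S) (phi : H -> S).

Definition eS : {vspace S} := (<[e]> * fullv)%VS.
Definition eS_act (h : H) : 'End(subvs_of eS) :=
  linfun (fun x : subvs_of eS => vsproj eS (phi h * vsval x)).
Definition eS_mod : fmod H := FMod (subvs_of eS) eS_act.
Definition eS_rmul (s : S) : 'End(subvs_of eS) :=
  linfun (fun x : subvs_of eS => vsproj eS (vsval x * s)).

Definition schurF (M : fmod S) : fmod H :=
  let eM := limg (mact M e) in
  FMod (subvs_of eM)
       (fun h => linfun (fun x : subvs_of eM => vsproj eM (mact M (phi h) (vsval x)))).

Definition homH_obstruction (N : fmod H) (f : 'Hom(subvs_of eS, mcar N)) :
    'Hom(H, 'Hom(subvs_of eS, mcar N)) :=
  linfun (fun h : H => (f \o eS_act h)%VF - (mact N h \o f)%VF).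
Definition homH (N : fmod H) : {vspace 'Hom(subvs_of eS, mcar N)} :=
  lker (linfun (@homH_obstruction N)).

Definition schurG (N : fmod H) : fmod S :=
  FMod (subvs_of (homH N))
       (fun s => linfun (fun f : subvs_of (homH N) =>
                   vsproj (homH N) (vsval f \o eS_rmul s)%VF)).
End Schur.

End Modules.

(* Main.v *)
Require Import Defs.
From HB Require Import structures.
From mathcomp Require Import all_boot all_order all_algebra.
From mathcomp Require Import falgebra.
From Stdlib Require Import Classical.
Import GRing.Theory Order.Theory.
Local Open Scope ring_scope.
Set Implicit Arguments. Unset Strict Implicit.

Lemma linfunE_gen (K : fieldType) (aT rT : vectType K) (f : aT -> rT) :
  (forall a x y, f (a *: x + y) = a *: f x + f y) -> linfun f =1 f.
Proof.
move=> lf.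
pose F : {linear aT -> rT} := HB.pack f (GRing.isLinear.Build K aT rT *:%R f lf).
exact: (lfunE F).
Qed.

Section Basics.
Variables (K : fieldType) (S H : falgType K) (e : S) (phi : H -> S).
Hypotheses (He : e * e = e) (Hc : corner_iso e phi).

Lemma phi_lin c a b : phi (c *: a + b) = c *: phi a + phi b.
Proof. by case: Hc. Qed.
Lemma phiM a b : phi (a * b) = phi a * phi b.
Proof. by case: Hc. Qed.
Lemma phi1 : phi 1 = e.
Proof. by case: Hc. Qed.
Lemma phi_inj : injective phi.
Proof. by case: Hc. Qed.
Lemma ephi h : e * phi h = phi h.
Proof. by case: Hc => _ _ _ _ [E _]; rewrite -[in RHS]E -[in LHS]E !mulrA He. Qed.
Lemma phie h : phi h * e = phi h.
Proof. by case: Hc => _ _ _ _ [E _]; rewrite -[in RHS]E -[in LHS]E -!mulrA He. Qed.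

Lemma memeS x : (x \in eS e) = (e * x == x).
Proof.
apply/idP/eqP.
  move=> xE.
  have lf : forall a (u v : S), e * (a *: u + v) - (a *: u + v) = a *: (e * u - u) + (e * v - v).
    by move=> a u v; rewrite mulrDr -scalerAr scalerBr addrACA opprD.
  have sub : (eS e <= lker (linfun (fun y : S => e * y - y)))%VS.
    apply/prodvP => u v /vlineP[k ->] _.
    by rewrite memv_ker linfunE_gen // -scalerAl -scalerAr mulrA He subrr.
  by move/subvP: sub => /(_ x xE); rewrite memv_ker linfunE_gen // subr_eq0 => /eqP.
by move <-; apply: memv_mul; [exact: memv_line | exact: memvf].
Qed.

Lemma eSe : e \in eS e. Proof. by rewrite memeS He. Qed.
Lemma eS_mulr x s : x \in eS e -> x * s \in eS e.
Proof. by rewrite !memeS mulrA => /eqP ->. Qed.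
Lemma eS_l x : x \in eS e -> e * x = x.
Proof. by rewrite memeS => /eqP. Qed.

Definition PHI : 'Hom(H, S) := linfun phi.
Definition pinv : 'Hom(S, H) := (PHI^-1)%VF.
Lemma PHIE h : PHI h = phi h.
Proof. by rewrite linfunE_gen //; apply: phi_lin. Qed.
Lemma pinvK h : pinv (phi h) = h.
Proof.
have k0 : lker PHI == 0%VS.
  by apply/lker0P => a b; rewrite !PHIE; apply: phi_inj.
by rewrite -PHIE /pinv (lker0_lfunK k0).
Qed.
Lemma phi_pinv x : x \in eS e -> phi (pinv (x * e)) = x * e.
Proof.
move=> xE; case: Hc => _ _ _ _ [_ Hs]; have [h Eh] := Hs x.
have -> : x * e = phi h by rewrite Eh eS_l.
by rewrite pinvK.
Qed.

Definition eE : subvs_of (eS e) := Subvs eSe.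

Lemma eS_actE h x : vsval (eS_act e phi h x) = phi h * vsval x.
Proof.
rewrite linfunE_gen ?vsprojK //.
  by rewrite memeS mulrA ephi.
by move=> a u v; rewrite linearP /= mulrDr -scalerAr linearP.
Qed.

Lemma rearr (V : lmodType K) (c : K) (x1 y1 x2 y2 : V) :
  (c *: x1 + y1) - (c *: x2 + y2) = c *: (x1 - x2) + (y1 - y2).
Proof. by rewrite scalerBr opprD addrACA. Qed.

Lemma rearr2 (V : zmodType) (a b c d : V) : a - b - (c - d) = a - c - (b - d).
Proof.
rewrite !opprB !addrA [a - b + d]addrAC [a - c + d]addrAC -!addrA.
by congr (_ + (_ + _)); rewrite addrC.
Qed.

Definition lin_act (A : falgType K) (N : fmod A) :=
  forall c a b, mact N (c *: a + b) = c *: mact N a + mact N b.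

Lemma eS_act_lin : lin_act (eS_mod e phi).
Proof.
move=> c a b; apply/lfunP => x; apply: subvs_inj.
rewrite /= add_lfunE scale_lfunE linearP /= !eS_actE phi_lin mulrDl.
by rewrite -scalerAl.
Qed.

Lemma obstrE (N : fmod H) (linN : lin_act N) f h :
  @homH_obstruction _ _ _ e phi N f h = (f \o eS_act e phi h)%VF - (mact N h \o f)%VF.
Proof.
rewrite linfunE_gen // => a u v.
have := eS_act_lin a u v; rewrite /= => ->.
by rewrite linN comp_lfunDr comp_lfunDl -comp_lfunZr -comp_lfunZl rearr.
Qed.

Lemma memhomH (N : fmod H) (linN : lin_act N) (f : 'Hom(subvs_of (eS e), mcar N)) :
  (f \in homH e phi N) <-> (forall h x, f (eS_act e phi h x) = mact N h (f x)).
Proof.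
rewrite /homH memv_ker linfunE_gen; last first.
  move=> a u v; apply/lfunP => h.
  rewrite add_lfunE scale_lfunE !obstrE // comp_lfunDl comp_lfunDr.
  by rewrite -comp_lfunZr -comp_lfunZl rearr.
split.
  move/eqP/lfunP => E h x; move: (E h); rewrite obstrE // zero_lfunE.
  by move/lfunP/(_ x); rewrite zero_lfunE add_lfunE opp_lfunE !comp_lfunE => /eqP; rewrite subr_eq0 => /eqP.
move=> E; apply/eqP/lfunP => h; rewrite obstrE // zero_lfunE.
apply/lfunP => x; rewrite zero_lfunE add_lfunE opp_lfunE !comp_lfunE E.
by rewrite subrr.
Qed.

Lemma fm_lin (A : falgType K) (N : fmod A) : is_fmod N -> lin_act N.
Proof. by case. Qed.
Lemma fm_mul (A : falgType K) (N : fmod A) : is_fmod N ->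
  forall a b v, mact N (a * b) v = mact N a (mact N b v).
Proof. by case => _ E _ a b v; rewrite E comp_lfunE. Qed.
Lemma fm_one (A : falgType K) (N : fmod A) : is_fmod N -> forall v, mact N 1 v = v.
Proof. by case => _ _ E v; rewrite E id_lfunE. Qed.
Lemma fm_add (A : falgType K) (N : fmod A) : is_fmod N ->
  forall a b v, mact N (a + b) v = mact N a v + mact N b v.
Proof. move=> /fm_lin L a b v. have := L 1 a b. rewrite !scale1r => ->. by rewrite add_lfunE. Qed.
Lemma fm_scale (A : falgType K) (N : fmod A) : is_fmod N ->
  forall c a v, mact N (c *: a) v = c *: mact N a v.
Proof.
move=> /fm_lin L c a v; have := L c a 0; rewrite addr0 => ->.
have := L 1 0 0; rewrite !scale1r addr0 => /(congr1 (fun z => z - mact N 0)).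
rewrite addrK subrr => <-.
by rewrite addr0 scale_lfunE.
Qed.

Lemma eS_rmulE s x : vsval (eS_rmul e s x) = vsval x * s.
Proof.
rewrite linfunE_gen ?vsprojK //; first by rewrite eS_mulr // subvsP.
by move=> a u v; rewrite linearP /= mulrDl -scalerAl linearP.
Qed.

Lemma rmul_act s h x : eS_rmul e s (eS_act e phi h x) = eS_act e phi h (eS_rmul e s x).
Proof. by apply: subvs_inj; rewrite eS_rmulE !eS_actE eS_rmulE mulrA. Qed.

Lemma comp_rmul_hom (N : fmod H) (linN : lin_act N) (f : 'Hom(subvs_of (eS e), mcar N)) s :
  f \in homH e phi N -> (f \o eS_rmul e s)%VF \in homH e phi N.
Proof.
move=> /memhomH fH; apply/memhomH => // h x.
by rewrite !comp_lfunE rmul_act fH.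
Qed.

Lemma schurG_actE (N : fmod H) (linN : lin_act N) s (f : subvs_of (homH e phi N)) :
  vsval (mact (schurG e phi N) s f) = (vsval f \o eS_rmul e s)%VF.
Proof.
rewrite /= linfunE_gen ?vsprojK //; first by apply: comp_rmul_hom => //; apply: subvsP.
by move=> a u v; rewrite linearP /= comp_lfunDl -comp_lfunZl linearP.
Qed.

Lemma schurG_actE' (N : fmod H) (linN : lin_act N) s (f : subvs_of (homH e phi N)) x :
  vsval (mact (schurG e phi N) s f) x = vsval f (eS_rmul e s x).
Proof. by rewrite schurG_actE // comp_lfunE. Qed.

Lemma eM_mem (M : fmod S) (fM : is_fmod M) s v : mact M (e * s) v \in limg (mact M e).
Proof. by rewrite fm_mul // memv_img ?memvf. Qed.

Lemma eM_fix (M : fmod S) (fM : is_fmod M) v : v \in limg (mact M e) -> mact M e v = v.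
Proof. by case/memv_imgP => w _ ->; rewrite -fm_mul // He. Qed.

Lemma schurF_actE (M : fmod S) (fM : is_fmod M) h (x : subvs_of (limg (mact M e))) :
  vsval (mact (schurF e phi M) h x) = mact M (phi h) (vsval x).
Proof.
rewrite /= linfunE_gen ?vsprojK //; first by rewrite -ephi eM_mem.
by move=> a u v; rewrite linearP /= linearP.
Qed.

Lemma schurF_lin (M : fmod S) (fM : is_fmod M) : lin_act (schurF e phi M).
Proof.
move=> c a b; apply/lfunP => x; apply: subvs_inj.
rewrite add_lfunE scale_lfunE linearP /= !schurF_actE // phi_lin.
by rewrite fm_add // fm_scale.
Qed.

Lemma rmul_eE_phi h : eS_rmul e (phi h) eE = eS_act e phi h eE.
Proof. by apply: subvs_inj; rewrite eS_rmulE eS_actE /= ephi phie. Qed.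

Lemma rmul_eE_e : eS_rmul e e eE = eE.
Proof. by apply: subvs_inj; rewrite eS_rmulE /= He. Qed.

Lemma rmul_x_eE (x : subvs_of (eS e)) : eS_rmul e (vsval x) eE = x.
Proof. by apply: subvs_inj; rewrite eS_rmulE /= eS_l // subvsP. Qed.

Lemma schurF_fmod (M : fmod S) (fM : is_fmod M) : is_fmod (schurF e phi M).
Proof.
split; first exact: schurF_lin.
  move=> a b; apply/lfunP => x; apply: subvs_inj.
  by rewrite comp_lfunE !schurF_actE // phiM fm_mul.
apply/lfunP => x; apply: subvs_inj.
by rewrite id_lfunE schurF_actE // phi1 eM_fix // subvsP.
Qed.

Section GN.
Variables (N : fmod H) (fN : is_fmod N).
Let linN := fm_lin fN.

Lemma G_faithful (f : subvs_of (homH e phi N)) :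
  (forall x : subvs_of (eS e), mact (schurG e phi N) (vsval x) f = 0) -> f = 0.
Proof.
move=> E; apply: subvs_inj; apply/lfunP => x.
have := congr1 (fun g : subvs_of (homH e phi N) => vsval g eE) (E x).
by rewrite /= schurG_actE' // rmul_x_eE !zero_lfunE.
Qed.

Lemma homP (f : subvs_of (homH e phi N)) h x :
  vsval f (eS_act e phi h x) = mact N h (vsval f x).
Proof. by have /memhomH := subvsP f; apply. Qed.

Lemma G_repr (psi : subvs_of (eS e) -> subvs_of (homH e phi N)) :
  (forall a u v, psi (a *: u + v) = a *: psi u + psi v) ->
  (forall h x, psi (eS_act e phi h x) = mact (schurG e phi N) (phi h) (psi x)) ->
  (forall x, mact (schurG e phi N) e (psi x) = psi x) ->
  exists d, forall x, mact (schurG e phi N) (vsval x) d = psi x.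
Proof.
move=> Lp Hp Ep.
pose d0 : 'Hom(subvs_of (eS e), mcar N) := linfun (fun y => vsval (psi y) eE).
have d0E y : d0 y = vsval (psi y) eE.
  rewrite linfunE_gen // => a u v.
  by rewrite Lp linearP /= add_lfunE scale_lfunE.
have d0H : d0 \in homH e phi N.
  apply/memhomH => // h y.
  by rewrite !d0E Hp schurG_actE' // rmul_eE_phi homP.
exists (Subvs d0H) => x; apply: subvs_inj; apply/lfunP => y.
rewrite schurG_actE' //= d0E.
have -> : eS_rmul e (vsval x) y = eS_act e phi (pinv (vsval y * e)) x.
  apply: subvs_inj; rewrite eS_rmulE eS_actE phi_pinv ?subvsP //.
  by rewrite -mulrA eS_l // subvsP.
rewrite Hp schurG_actE' // -[in RHS]Ep schurG_actE' //; congr (vsval (psi x) _).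
apply: subvs_inj; rewrite !eS_rmulE phi_pinv ?subvsP //= mulrA.
by rewrite eS_l // subvsP.
Qed.

Definition evN : 'Hom(mcar (schurG e phi N), mcar N) :=
  linfun (fun f : subvs_of (homH e phi N) => vsval f eE).
Lemma evNE f : evN f = vsval f eE.
Proof. by rewrite linfunE_gen // => a u v; rewrite linearP /= add_lfunE scale_lfunE. Qed.

Definition iota0 (n : mcar N) : 'Hom(subvs_of (eS e), mcar N) :=
  linfun (fun x : subvs_of (eS e) => mact N (pinv (vsval x * e)) n).
Lemma iota0E n x : iota0 n x = mact N (pinv (vsval x * e)) n.
Proof.
rewrite linfunE_gen // => a u v.
by rewrite linearP /= mulrDl -scalerAl linearP /= fm_add // fm_scale.
Qed.
Lemma iota0H n : iota0 n \in homH e phi N.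
Proof.
apply/memhomH => // h x; rewrite !iota0E eS_actE -mulrA -{1}(phi_pinv (subvsP x)).
by rewrite -phiM pinvK fm_mul.
Qed.
Definition iotaN : 'Hom(mcar N, mcar (schurG e phi N)) :=
  linfun (fun n => Subvs (iota0H n)).
Lemma iotaNE n : vsval (iotaN n) = iota0 n.
Proof.
rewrite linfunE_gen // => a u v; apply: subvs_inj; rewrite /=.
apply/lfunP => x; rewrite add_lfunE scale_lfunE !iota0E.
by rewrite linearP.
Qed.
Lemma iotaNE' n x : vsval (iotaN n) x = mact N (pinv (vsval x * e)) n.
Proof. by rewrite iotaNE iota0E. Qed.

Lemma ev_iota n : evN (iotaN n) = n.
Proof. by rewrite evNE iotaNE' /= He -phi1 pinvK fm_one. Qed.

Lemma iota_ev f : iotaN (evN f) = mact (schurG e phi N) e f.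
Proof.
apply: subvs_inj; apply/lfunP => x.
rewrite iotaNE' schurG_actE' // evNE -homP; congr (vsval f _).
by apply: subvs_inj; rewrite eS_rmulE eS_actE phi_pinv ?subvsP //= -mulrA He.
Qed.

Lemma iota_act h n : iotaN (mact N h n) = mact (schurG e phi N) (phi h) (iotaN n).
Proof.
apply: subvs_inj; apply/lfunP => x.
rewrite schurG_actE' // !iotaNE' eS_rmulE -fm_mul //; congr (mact N _ n).
rewrite -mulrA phie -(ephi h) mulrA -(phi_pinv (subvsP x)) -phiM.
by rewrite !pinvK.
Qed.

Lemma ev_act h f : evN (mact (schurG e phi N) (phi h) f) = mact N h (evN f).
Proof. by rewrite !evNE schurG_actE' // rmul_eE_phi homP. Qed.

Lemma ev_e f : evN (mact (schurG e phi N) e f) = evN f.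
Proof. by rewrite !evNE schurG_actE' // rmul_eE_e. Qed.

End GN.

Lemma submod_mem (A : falgType K) (M : fmod A) (U : {vspace mcar M}) a v :
  is_submod U -> v \in U -> mact M a v \in U.
Proof. by move=> HU vU; apply: (subvP (HU a)); apply: memv_img. Qed.

Lemma iso_of_bij (A : falgType K) (M N : fmod A) (f : 'Hom(mcar M, mcar N)) :
  is_hom f -> (forall m, f m = 0 -> m = 0) -> (forall y, exists m, f m = y) ->
  mod_iso N M.
Proof.
move=> fH inj sur.
have k0 : lker f == 0%VS.
  apply/eqP/subv_anti; rewrite sub0v andbT; apply/subvP => m.
  by rewrite memv_ker memv0 => /eqP /inj ->.
have fK : forall y, f (f^-1%VF y) = y.
  by move=> y; apply: limg_lfunVK; have [m <-] := sur y; apply: memv_img; apply: memvf.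
have finj : injective f by apply/lker0P.
exists (f^-1)%VF, f; split => //.
- move=> a; apply/lfunP => y; rewrite !comp_lfunE; apply: finj.
  have := fH a => /lfunP /(_ (f^-1%VF y)); rewrite !comp_lfunE => ->.
  by rewrite !fK.
- by apply/lfunP => y; rewrite comp_lfunE fK id_lfunE.
- exact: lker0_compVf.
Qed.

Section PartB.
Variables (I : Type) (D : I -> fmod H) (fD : forall i, is_fmod (D i)).
Variables (M : fmod S) (fM : is_fmod M).

Local Notation eM := (limg (mact M e)).
Local Notation FM := (schurF e phi M).
Let linFM := schurF_lin fM.

Definition etaf (m : mcar M) : 'Hom(subvs_of (eS e), subvs_of eM) :=
  linfun (fun x : subvs_of (eS e) => vsproj eM (mact M (vsval x) m)).
Lemma etafE m x : vsval (etaf m x) = mact M (vsval x) m.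
Proof.
rewrite linfunE_gen ?vsprojK //; first by rewrite -(eS_l (subvsP x)) eM_mem.
by move=> a u v; rewrite !linearP /= fm_add // fm_scale // linearP.
Qed.
Lemma etafH m : etaf m \in homH e phi FM.
Proof.
apply/memhomH => // h x; apply: subvs_inj.
by rewrite etafE schurF_actE // etafE eS_actE fm_mul.
Qed.
Definition eta : 'Hom(mcar M, mcar (schurG e phi FM)) :=
  linfun (fun m => Subvs (etafH m)).
Lemma etaE m x : vsval (vsval (eta m) x) = mact M (vsval x) m.
Proof.
rewrite linfunE_gen ?etafE // => a u v; apply: subvs_inj; apply/lfunP => y.
apply: subvs_inj; rewrite /= add_lfunE scale_lfunE linearP /= !etafE.
by rewrite linearP.
Qed.

Lemma eta_hom : is_hom eta.
Proof.
move=> a; apply/lfunP => m; rewrite !comp_lfunE; apply: subvs_inj; apply/lfunP => x.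
apply: subvs_inj; rewrite etaE schurG_actE' // etaE eS_rmulE fm_mul //.
Qed.

Lemma partB : has_filtration (fun i => schurG e phi (D i)) M ->
  mod_iso (schurG e phi FM) M.
Proof.
case=> t [U [U0 Ut Usub Uinc Usq]].
suff : forall i, (i <= t)%N ->
   (forall m, m \in U i -> eta m = 0 -> m = 0) /\
   (forall F : subvs_of (homH e phi FM), (forall x, vsval (vsval F x) \in U i) ->
        exists2 m, m \in U i & eta m = F).
  case/(_ t (leqnn t)) => inj sur.
  apply: (iso_of_bij eta_hom).
    by move=> m; apply: inj; rewrite Ut memvf.
  by move=> F; have [|m _ <-] := sur F; [move=> x; rewrite Ut memvf | exists m].
elim=> [_|i IH lti].
  rewrite U0; split; first by move=> m; rewrite memv0 => /eqP.
  move=> F HF; exists 0; first by rewrite mem0v.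
  rewrite linear0; apply: subvs_inj; apply/lfunP => x; apply: subvs_inj.
  by have := HF x; rewrite memv0 => /eqP ->; rewrite zero_lfunE.
have [IHi IHs] := IH (ltnW lti).
have [mu [g [gU gK gE]]] := Usq i lti.
have Hsub := Usub i.+1 lti.
have Hinc := Uinc i lti.
have fDm := fD mu.
have inKer : forall m, m \in U i.+1 -> g m = 0 -> m \in U i.
  by move=> m mU gm; rewrite -gK; apply/memv_capP; split => //; rewrite memv_ker gm.
split.
  move=> m mU em.
  have ex : forall x : subvs_of (eS e), mact M (vsval x) m = 0.
    by move=> x; rewrite -etaE em linear0 zero_lfunE linear0.
  apply: IHi => //; apply: inKer => //; apply: G_faithful => // x.
  by rewrite -gE // ex linear0.
move=> F HF.
pose psi := fun x => g (vsval (vsval F x)).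
have [d Hd] : exists d, forall x, mact (schurG e phi (D mu)) (vsval x) d = psi x.
  apply: G_repr => //.
  - by move=> a u v; rewrite /psi !linearP.
  - move=> h x; rewrite /psi (homP (schurF_fmod fM)).
    transitivity (g (mact M (phi h) (vsval (vsval F x)))); first by congr (g _); apply: schurF_actE.
    by rewrite gE ?HF.
  - by move=> x; rewrite /psi -gE ?HF // eM_fix // subvsP.
have : d \in (g @: U i.+1)%VS by rewrite gU memvf.
case/memv_imgP => m0 m0U dE.
pose F' := F - eta m0.
have HF' : forall x, vsval (vsval F' x) \in U i.
  move=> x; have e1 : vsval (vsval F' x) = vsval (vsval F x) - mact M (vsval x) m0.
    by rewrite /F' !linearB /= add_lfunE opp_lfunE linearB /= etaE.
  rewrite e1; apply: inKer.
    by rewrite memvB ?HF // submod_mem.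
  by rewrite linearB /= gE // -dE Hd subrr.
have [m1 m1U m1E] := IHs F' HF'.
exists (m0 + m1); first by rewrite memvD // (subvP Hinc).
by rewrite linearD /= m1E /F' addrC subrK.
Qed.

End PartB.

Section PartA2.
Variables (I : Type) (D : I -> fmod H) (fD : forall i, is_fmod (D i)).
Variables (N : fmod H) (fN : is_fmod N).

Lemma partA2 : has_filtration (fun i => schurG e phi (D i)) (schurG e phi N) ->
  has_filtration D N.
Proof.
case=> t [W [W0 Wt Wsub Winc Wsq]].
exists t, (fun i => evN N @: W i)%VS; split.
- by rewrite W0 limg0.
- apply: subv_anti; rewrite subvf /=; apply/subvP => n _.
  by rewrite -(ev_iota fN n) Wt memv_img ?memvf.
- move=> i lei a; apply/subvP => y /memv_imgP [z /memv_imgP [w wW ->] ->].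
  by rewrite -(ev_act fN); apply: memv_img; apply: (submod_mem (M:=schurG e phi N)) => //; apply: Wsub.
- by move=> i lti; apply: limgS; apply: Winc.
move=> i lti.
have [mu [g [gU gK gE]]] := Wsq i lti.
have fDm := fD mu.
have Hsub := Wsub i.+1 lti.
have Hinc := Winc i lti.
have WinW' : forall w, w \in W i -> w \in W i.+1 by move=> w; apply: (subvP Hinc).
have WinK : forall w, w \in W i -> g w = 0.
  by move=> w; rewrite -gK => /memv_capP [_]; rewrite memv_ker => /eqP.
exists mu, (evN (D mu) \o g \o iotaN fN)%VF; split.
- apply: subv_anti; rewrite subvf /=; apply/subvP => s _.
  have : iotaN fDm s \in (g @: W i.+1)%VS by rewrite gU memvf.
  case/memv_imgP => w wW Ew.
  rewrite -[s](_ : (evN (D mu) \o g \o iotaN fN)%VF (evN N w) = s).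
    by apply: memv_img; apply: memv_img.
  by rewrite !comp_lfunE (iota_ev fN) gE // ev_e // -Ew ev_iota.
- apply: subv_anti; apply/andP; split; apply/subvP => n.
    case/memv_capP => /memv_imgP [w wW ->].
    rewrite memv_ker !comp_lfunE (iota_ev fN) gE // ev_e // => /eqP g0.
    have : g (mact (schurG e phi N) e w) = 0.
      by rewrite gE // -(iota_ev fDm) g0 linear0.
    move=> gw0; rewrite -(ev_e fN); apply: memv_img; rewrite -gK.
    by apply/memv_capP; split; [apply: submod_mem | rewrite memv_ker gw0].
  case/memv_imgP => w wW ->; apply/memv_capP; split.
    by apply: memv_img; apply: WinW'.
  rewrite memv_ker !comp_lfunE (iota_ev fN) WinK ?linear0 //.
  by apply: submod_mem => //; apply: (Wsub i (ltnW lti)).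
move=> h n /memv_imgP [w wW ->].
rewrite !comp_lfunE (iota_act fN) (iota_ev fN) gE; last by apply: submod_mem.
by rewrite (ev_act fDm).
Qed.
End PartA2.

Lemma eS_act_mul a b x : eS_act e phi (a * b) x = eS_act e phi a (eS_act e phi b x).
Proof. by apply: subvs_inj; rewrite !eS_actE phiM mulrA. Qed.
Lemma eS_act_one x : eS_act e phi 1 x = x.
Proof. by apply: subvs_inj; rewrite eS_actE phi1 eS_l // subvsP. Qed.
Lemma eS_act_linh c a b x :
  eS_act e phi (c *: a + b) x = c *: eS_act e phi a x + eS_act e phi b x.
Proof. by have := eS_act_lin c a b; rewrite /= => ->; rewrite add_lfunE scale_lfunE. Qed.

Section PartA1.
Variables (N : fmod H) (fN : is_fmod N).
Let linN := fm_lin fN.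

Definition ishom (f : 'Hom(subvs_of (eS e), mcar N)) :=
  forall h x, f (eS_act e phi h x) = mact N h (f x).

Definition obst (f : 'Hom(subvs_of (eS e), mcar N)) h x :=
  f (eS_act e phi h x) - mact N h (f x).

Lemma obst_linx f h a u v : obst f h (a *: u + v) = a *: obst f h u + obst f h v.
Proof. by rewrite /obst !linearP /= scalerN scalerBr addrACA. Qed.
Lemma obst_linh f c a b x : obst f (c *: a + b) x = c *: obst f a x + obst f b x.
Proof.
by rewrite /obst eS_act_linh linearP /= fm_add // fm_scale // rearr.
Qed.
Lemma obst_mul f a b x :
  obst f (a * b) x = obst f a (eS_act e phi b x) + mact N a (obst f b x).
Proof.
rewrite /obst eS_act_mul fm_mul // linearB /= addrA; congr (_ + _).
by rewrite subrK.
Qed.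
Lemma obst_one f x : obst f 1 x = 0.
Proof. by rewrite /obst eS_act_one fm_one // subrr. Qed.

Variables (Dm : fmod H) (fDm : is_fmod Dm).
Hypothesis Hext : ~ ext1_nonzero (eS_mod e phi) Dm.
Variables (U U' : {vspace mcar N}) (g : 'Hom(mcar N, mcar Dm)).
Hypotheses (gU : (g @: U' = fullv)%VS) (gK : (U' :&: lker g = U)%VS)
  (gE : forall a v, v \in U' -> g (mact N a v) = mact Dm a (g v))
  (subU' : is_submod U').

Lemma lift_step :
  (forall f, (forall h x, obst f h x \in U) ->
     exists2 tau : 'Hom(subvs_of (eS e), mcar N), (forall x, tau x \in U) & ishom (f - tau)) ->
  forall f, (forall h x, obst f h x \in U') ->
     exists2 tau : 'Hom(subvs_of (eS e), mcar N), (forall x, tau x \in U') & ishom (f - tau).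
Proof.
move=> IH f Hf.
pose c := obst f.
pose Ecar : vectType K := (subvs_of (eS e) * mcar Dm)%type.
pose actf h (p : Ecar) : Ecar := (eS_act e phi h p.1, mact Dm h p.2 + g (c h p.1)).
have actf_lin h : forall a (p q : Ecar), actf h (a *: p + q) = a *: actf h p + actf h q.
  move=> a p q; rewrite /actf /=; congr (_, _); first by rewrite linearP.
  by rewrite /c obst_linx !linearP /= addrACA -scalerDr.
pose E : fmod H := @FMod K H Ecar (fun h => linfun (actf h)).
have EE h p : mact E h p = actf h p by rewrite /= linfunE_gen.
have fE : is_fmod E.
  split.
  - move=> c0 a b; apply/lfunP => p; rewrite add_lfunE scale_lfunE !EE /actf /=.
    congr (_, _); first by rewrite eS_act_linh.
    by rewrite fm_add // fm_scale // /c obst_linh !linearP /= addrACA -scalerDr.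
  - move=> a b; apply/lfunP => p; rewrite comp_lfunE !EE /actf /=.
    congr (_, _); first by rewrite eS_act_mul.
    rewrite fm_mul // /c obst_mul linearD /= gE ?Hf //.
    by rewrite [mact Dm a (_ + _)]linearD addrA addrAC.
  - apply/lfunP => p; rewrite id_lfunE EE /actf /c eS_act_one obst_one linear0 addr0.
    by rewrite fm_one //; case: p.
pose i0 : 'Hom(mcar Dm, mcar E) := linfun (fun s => (0 : subvs_of (eS e), s)).
have i0E s : i0 s = (0, s).
  rewrite linfunE_gen // => a u v.
  by rewrite -[RHS]/(a *: 0 + 0, a *: u + v) scaler0 addr0.
pose p0 : 'Hom(mcar E, mcar (eS_mod e phi)) := linfun (fun q : Ecar => q.1).
have p0E q : p0 q = q.1 by rewrite linfunE_gen.
have [s [sH sK]] : exists s : 'Hom(mcar (eS_mod e phi), mcar E), is_hom s /\ (p0 \o s = \1)%VF.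
  apply: NNPP => nsp; apply: Hext; exists E, i0, p0; split => //.
  - move=> h; apply/lfunP => q; rewrite !comp_lfunE !i0E EE /actf /= linear0.
    by rewrite /c /obst !linear0 addr0 linear0 addr0.
  - by move=> h; apply/lfunP => q; rewrite !comp_lfunE !p0E EE.
  split.
  - apply: subv_anti; rewrite sub0v andbT; apply/subvP => q.
    by rewrite memv_ker i0E memv0 => /eqP [] ->.
  - apply: subv_anti; rewrite subvf /=; apply/subvP => x _.
    by apply/memv_imgP; exists (x, 0); rewrite ?memvf ?p0E.
  - apply: subv_anti; apply/andP; split; apply/subvP => q.
      by case/memv_imgP => y _ ->; rewrite memv_ker p0E i0E.
    rewrite memv_ker p0E => /eqP q1; apply/memv_imgP; exists q.2; rewrite ?memvf //.
    by rewrite i0E -q1; case: q q1.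
pose sig : 'Hom(subvs_of (eS e), mcar Dm) := linfun (fun x => (s x).2).
have sigE x : sig x = (s x).2.
  by rewrite linfunE_gen // => a u v; rewrite linearP.
have s1 x : (s x).1 = x.
  by move: sK => /lfunP /(_ x); rewrite comp_lfunE p0E id_lfunE.
have sigH h x : sig (eS_act e phi h x) = mact Dm h (sig x) + g (c h x).
  have := sH h; move/lfunP/(_ x); rewrite !comp_lfunE EE /actf.
  move=> E1; rewrite sigE (_ : eS_act e phi h x = mact (eS_mod e phi) h x) // E1 /=.
  by rewrite sigE s1.
pose gP := (g \o projv U')%VF.
have gPfull : limg gP = fullv by rewrite limg_comp limg_proj gU.
pose t1 : 'Hom(subvs_of (eS e), mcar N) := (projv U' \o gP^-1 \o sig)%VF.
have t1U x : t1 x \in U' by rewrite !comp_lfunE memv_proj.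
have gt1 x : g (t1 x) = sig x.
  have := limg_lfunVK (f := gP) (x := sig x); rewrite gPfull memvf => /(_ isT).
  by rewrite !comp_lfunE.
have UU' : (U <= U')%VS by rewrite -gK capvSl.
have inKer v : v \in U' -> g v = 0 -> v \in U.
  by move=> vU gv; rewrite -gK; apply/memv_capP; split => //; rewrite memv_ker gv.
have Hob : forall h x, obst (f - t1) h x \in U.
  move=> h x.
  have ob : obst (f - t1) h x = c h x - (t1 (eS_act e phi h x) - mact N h (t1 x)).
    by rewrite /obst /c /obst !add_lfunE !opp_lfunE linearB /= rearr2.
  rewrite ob; apply: inKer.
    by rewrite memvB ?Hf // memvB // submod_mem.
  rewrite (linearB g) /= (linearB g (t1 _)) /= gE // !gt1 sigH.
  by rewrite addrAC subrr add0r subrr.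
have [t2 t2U t2H] := IH (f - t1) Hob.
exists (t1 + t2) => [x|]; first by rewrite add_lfunE memvD // (subvP UU').
by rewrite opprD addrA.
Qed.
End PartA1.

Lemma lin_section (N Dm : fmod H) (U' : {vspace mcar N}) (g : 'Hom(mcar N, mcar Dm)) :
  (g @: U' = fullv)%VS ->
  exists r : 'Hom(mcar Dm, mcar N), forall y, r y \in U' /\ g (r y) = y.
Proof.
move=> gU; pose gP := (g \o projv U')%VF.
have gPfull : limg gP = fullv by rewrite limg_comp limg_proj gU.
exists (projv U' \o gP^-1)%VF => y; split; first by rewrite comp_lfunE memv_proj.
have := limg_lfunVK (f := gP) (x := y); rewrite gPfull memvf => /(_ isT).
by rewrite !comp_lfunE.
Qed.

Section PartA1b.
Variables (I : Type) (D : I -> fmod H) (fD : forall i, is_fmod (D i)).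
Hypothesis Hext : forall mu, ~ ext1_nonzero (eS_mod e phi) (D mu).
Variables (N : fmod H) (fN : is_fmod N).
Variables (t : nat) (U : nat -> {vspace mcar N}).
Hypotheses (U0 : U 0%N = 0%VS) (Usub : forall i, (i <= t)%N -> is_submod (U i))
  (Usq : forall i, (i < t)%N -> exists mu, subquot_iso (U i) (U i.+1) (D mu)).

Lemma lift_all i : (i <= t)%N -> forall f, (forall h x, obst f h x \in U i) ->
  exists2 tau : 'Hom(subvs_of (eS e), mcar N), (forall x, tau x \in U i) & ishom (f - tau).
Proof.
elim: i => [_ f Hf|i IH lti].
  exists 0 => [x|h x]; first by rewrite U0 zero_lfunE mem0v.
  have := Hf h x; rewrite U0 memv0 subr0 => /eqP; rewrite /obst => /eqP.
  by rewrite subr_eq0 => /eqP.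
have [mu [g [gU gK gE]]] := Usq lti.
apply: (lift_step fN (fD mu) (@Hext mu) gU gK gE (Usub lti)).
exact: IH (ltnW lti).
Qed.
End PartA1b.

Lemma memC (N : fmod H) (U : {vspace mcar N}) v :
  ((\1 - projv U)%VF v == 0) = (v \in U).
Proof.
rewrite add_lfunE opp_lfunE id_lfunE subr_eq0; apply/eqP/idP => [E|vU].
  by rewrite E memv_proj.
by rewrite projv_id.
Qed.

Section PartA1c.
Variables (I : Type) (D : I -> fmod H) (fD : forall i, is_fmod (D i)).
Hypothesis Hext : forall mu, ~ ext1_nonzero (eS_mod e phi) (D mu).
Variables (N : fmod H) (fN : is_fmod N).
Let linN := fm_lin fN.

Definition Wsp (U : {vspace mcar N}) : {vspace mcar (schurG e phi N)} :=
  lker (linfun (fun f : subvs_of (homH e phi N) => ((\1 - projv U) \o vsval f)%VF)).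

Lemma memW U (f : mcar (schurG e phi N)) : (f \in Wsp U) <-> (forall x, vsval f x \in U).
Proof.
rewrite /Wsp memv_ker linfunE_gen; last first.
  by move=> a u v; rewrite linearP /= comp_lfunDr -comp_lfunZr.
split.
  move/eqP/lfunP => E x; have := E x; rewrite comp_lfunE zero_lfunE => /eqP.
  by rewrite memC.
move=> E; apply/eqP/lfunP => x; rewrite comp_lfunE zero_lfunE; apply/eqP.
by rewrite memC.
Qed.

Lemma partA1 : has_filtration D N -> has_filtration (fun i => schurG e phi (D i)) (schurG e phi N).
Proof.
case=> t [U [U0 Ut Usub Uinc Usq]].
exists t, (fun i => Wsp (U i)); split.
- apply: subv_anti; rewrite sub0v andbT; apply/subvP => f /memW fW.
  rewrite memv0; apply/eqP; apply: subvs_inj; apply/lfunP => x.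
  by have := fW x; rewrite U0 memv0 zero_lfunE => /eqP.
- apply: subv_anti; rewrite subvf /=; apply/subvP => f _; apply/memW => x.
  by rewrite Ut memvf.
- move=> i lei s; apply/subvP => y /memv_imgP [f /memW fW ->]; apply/memW => x.
  by rewrite schurG_actE'.
- move=> i lti; apply/subvP => f /memW fW; apply/memW => x.
  exact: (subvP (Uinc i lti)).
move=> i lti.
have [mu [g [gU gK gE]]] := Usq i lti.
have fDm := fD mu.
have Hsub := Usub i.+1 lti.
have UU' : (U i <= U i.+1)%VS by rewrite -gK capvSl.
have inKer v : v \in U i.+1 -> g v = 0 -> v \in U i.
  by move=> vU gv; rewrite -gK; apply/memv_capP; split => //; rewrite memv_ker gv.
have UK v : v \in U i -> g v = 0.
  by rewrite -gK => /memv_capP [_]; rewrite memv_ker => /eqP.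
have gfH (f : mcar (schurG e phi N)) : f \in Wsp (U i.+1) ->
    (g \o vsval f)%VF \in homH e phi (D mu).
  move=> /memW fW; apply/memhomH; first exact: fm_lin.
  by move=> h x; rewrite !comp_lfunE homP // gE.
pose Gam : 'Hom(mcar (schurG e phi N), mcar (schurG e phi (D mu))) :=
  linfun (fun f : subvs_of (homH e phi N) => vsproj (homH e phi (D mu)) (g \o vsval f)%VF).
have GamE f : Gam f = vsproj (homH e phi (D mu)) (g \o vsval f)%VF.
  by rewrite linfunE_gen // => a u v; rewrite linearP /= comp_lfunDr -comp_lfunZr linearP.
have GamE' f : f \in Wsp (U i.+1) -> vsval (Gam f) = (g \o vsval f)%VF.
  by move=> fW; rewrite GamE vsprojK // gfH.
exists mu, Gam; split.
- apply: subv_anti; rewrite subvf /=; apply/subvP => psi _.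
  have [r Hr] := lin_section gU.
  pose f0 := (r \o vsval psi)%VF.
  have Hob : forall h x, obst f0 h x \in U i.
    move=> h x; rewrite /obst /f0 !comp_lfunE; apply: inKer.
      by rewrite memvB ?(proj1 (Hr _)) // submod_mem // (proj1 (Hr _)).
    rewrite linearB /= gE ?(proj1 (Hr _)) // !(proj2 (Hr _)) homP //.
    by rewrite subrr.
  have [tau tauU tauH] := lift_all fD Hext fN U0 Usub (fun i lti => Usq i lti) (ltnW lti) Hob.
  have fH : (f0 - tau)%VF \in homH e phi N by apply/memhomH.
  have fW : (Subvs fH : mcar (schurG e phi N)) \in Wsp (U i.+1).
    apply/memW => x /=; rewrite add_lfunE opp_lfunE memvB //.
      by rewrite comp_lfunE (proj1 (Hr _)).
    exact: (subvP UU').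
  rewrite -(_ : Gam (Subvs fH) = psi); first by apply: memv_img.
  apply: subvs_inj; rewrite GamE' //; apply/lfunP => x.
  rewrite comp_lfunE /= add_lfunE opp_lfunE (linearB g) /= (UK (tau x)) // subr0.
  by rewrite comp_lfunE (proj2 (Hr _)).
- apply: subv_anti; apply/andP; split; apply/subvP => f.
    case/memv_capP => fW; rewrite memv_ker => /eqP G0.
    apply/memW => x; apply: inKer; first by move/memW: fW; apply.
    have := congr1 (fun F : mcar (schurG e phi (D mu)) => vsval F x) G0.
    by rewrite GamE' // comp_lfunE /= zero_lfunE.
  move=> fW; have fW' : f \in Wsp (U i.+1).
    by apply/memW => x; apply: (subvP UU'); move/memW: fW; apply.
  apply/memv_capP; split => //; rewrite memv_ker GamE.
  rewrite (_ : (g \o vsval f)%VF = 0) ?linear0 //.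
  by apply/lfunP => x; rewrite comp_lfunE zero_lfunE UK //; move/memW: fW; apply.
move=> s f fW.
have sfW : mact (schurG e phi N) s f \in Wsp (U i.+1).
  by apply/memW => x; rewrite schurG_actE' //; move/memW: fW; apply.
apply: subvs_inj.
transitivity ((g \o vsval (mact (schurG e phi N) s f))%VF); first exact: GamE'.
rewrite schurG_actE // schurG_actE ?fm_lin //.
transitivity ((g \o vsval f) \o eS_rmul e s)%VF; first by rewrite comp_lfunA.
congr (_ \o _)%VF.
  by apply/esym/GamE'.
exact: fm_lin.
Qed.
End PartA1c.

End Basics.

Lemma dual_fmod (K : fieldType) (A : falgType K) (st : A -> A) (V : fmod A) :
  alg_antiautomorphism st -> is_fmod V -> is_fmod (dual_mod st V).
Proof.
case=> stL stM st1 _ [VL VM V1].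
have dualE h (f : 'Hom(mcar V, K^o)) :
    mact (dual_mod st V) h f = (f \o mact V (st h))%VF.
  by rewrite linfunE_gen // => a u v; rewrite comp_lfunDl -comp_lfunZl.
split.
- move=> c a b; apply/lfunP => f; rewrite add_lfunE scale_lfunE !dualE.
  by rewrite stL VL comp_lfunDr -comp_lfunZr.
- move=> a b; apply/lfunP => f; rewrite comp_lfunE !dualE stM VM.
  by rewrite comp_lfunA.
- by apply/lfunP => f; rewrite id_lfunE dualE st1 V1 comp_lfun1r.
Qed.

Unset Implicit Arguments.
Set Strict Implicit.

Theorem lemma8p4 (K : fieldType) (S H : falgType K) (e : S) (phi : H -> S)
    (d : Order.disp_t) (Lam : finPOrderType d)
    (Sp : Lam -> fmod H) (sh st : H -> H) (tr : Lam -> Lam) :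
  e * e = e ->
  corner_iso e phi ->
  (* (i) Specht modules *)
  (forall l, is_fmod (Sp l)) ->
  (forall l m, l != m -> ~ mod_iso (Sp l) (Sp m)) ->
  (forall l m, ext1_nonzero (Sp l) (Sp m) -> (m < l)%O) ->
  (* (ii) the automorphism #, the anti-automorphism *, the involution t *)
  alg_automorphism sh -> alg_antiautomorphism st ->
  (forall l, tr (tr l) = l) ->
  (forall l m, (l <= m)%O -> (tr m <= tr l)%O) ->
  (forall l, mod_iso (dual_mod st (Sp (tr l))) (twist_mod sh (Sp l))) ->
  (* R^1 G (S_lambda) = Ext^1_H(eS, S_lambda) = 0 *)
  (forall l, ~ ext1_nonzero (eS_mod e phi) (dual_mod st (Sp l))) ->
  (forall N : fmod H, is_fmod N ->
     has_filtration (fun l => dual_mod st (Sp l)) N <->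
     has_filtration (fun l => schurG e phi (dual_mod st (Sp l))) (schurG e phi N))
  /\
  (forall M : fmod S, is_fmod M ->
     has_filtration (fun l => schurG e phi (dual_mod st (Sp l))) M ->
     mod_iso (schurG e phi (schurF e phi M)) M).
Proof.
move=> He Hc fSp _ _ _ Hst _ _ _ Hext.
have fD : forall l, is_fmod (dual_mod st (Sp l)) by move=> l; apply: dual_fmod.
split.
  move=> N fN; split.
    exact: (partA1 He Hc fD Hext fN).
  exact: (partA2 He Hc fD fN).
move=> M fM; exact: (partB He Hc fD fM).
Qed.
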